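(* Let $G$ be a non-cyclic finite group of odd order $n$. Then $$\psi(G)<\frac{1}{2}\,\psi(C_n).$$
   Context: For a finite group $G$, $\psi(G)=\sum_{g\in G} o(g)$ denotes the sum of the orders of all elements of $G$. $C_n$ denotes the cyclic group of order $n$. *)

(* Defs.v *)
From mathcomp Require Import all_boot all_fingroup all_algebra all_solvable.
Set Implicit Arguments. Unset Strict Implicit. Unset Printing Implicit Defensive.

Definition psi (gT : finGroupType) (G : {set gT}) : nat := \sum_(x in G) #[x]%g.

(* psi(C_n), computed on the concrete cyclic group Zp n of order n (n >= 1) *)
Definition psiC (n : nat) : nat := psi (Zp n).

(* Main.v *)
Require Import Defs.
From mathcomp Require Import all_boot all_fingroup all_algebra all_solvable.
From mathcomp Require Import zify ring.
Set Implicit Arguments. Unset Strict Implicit. Unset Printing Implicit Defensive.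
Set Warnings "-all".


Definition T n := \sum_(0 <= k < n) n %/ gcdn n k.

Lemma sum_split (F : nat -> nat) q N :
  \sum_(0 <= k < N * q) F k = \sum_(0 <= j < N) \sum_(0 <= r < q) F (j * q + r).
Proof.
elim: N => [|N IH]; first by rewrite mul0n !big_geq.
rewrite mulSnr (big_cat_nat _ (leq_addr _ _)) //= IH big_nat_recr //=.
congr (_ + _).
rewrite -{1}[N * q]add0n big_addn.
have -> : N * q + q - N * q = q by rewrite addKn.
by apply: eq_bigr => i _; rewrite addnC.
Qed.

Lemma T1 : T 1 = 1.
Proof. by rewrite /T big_nat1 gcdn0 divnn. Qed.

Lemma T0 : T 0 = 0.
Proof. by rewrite /T big_geq. Qed.

Lemma term_le r k x : 0 < r -> 0 < k ->
  k %/ gcdn k x <= (r * k) %/ gcdn (r * k) x.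
Proof.
move=> r0 k0.
have g2p : 0 < gcdn k x by rewrite gcdn_gt0 k0.
have g1p : 0 < gcdn (r * k) x by rewrite gcdn_gt0 muln_gt0 r0 k0.
have : gcdn (r * k) x <= r * gcdn k x.
  apply: dvdn_leq; first by rewrite muln_gt0 r0.
  rewrite muln_gcdr dvdn_gcd dvdn_gcdl /=.
  exact: dvdn_trans (dvdn_gcdr _ _) (dvdn_mull _ _).
move=> H; apply: leq_trans (leq_div2l _ g1p H).
by rewrite divnMl.
Qed.

Lemma T_mulr r k : r * T k <= T (r * k).
Proof.
have [->|r0] := posnP r; first by [].
have [->|k0] := posnP k; first by rewrite T0 muln0.
rewrite /T sum_split -[r in r * _]subn0 -sum_nat_const_nat.
apply: leq_sum => j _.
apply: leq_sum => i _.
rewrite mulnC.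
have -> : gcdn k i = gcdn k (j * k + i) by rewrite gcdnMDl.
by rewrite [k * r]mulnC term_le.
Qed.

Lemma T_step p a : prime p ->
  T (p ^ a.+1) = T (p ^ a) + p ^ a * ((p - 1) * p ^ a.+1).
Proof.
move=> pp; have p0 := prime_gt0 pp.
have -> : p ^ a * ((p - 1) * p ^ a.+1) = \sum_(0 <= j < p ^ a) ((p - 1) * p ^ a.+1).
  by rewrite sum_nat_const_nat subn0.
rewrite {1}/T expnSr sum_split /T -big_split /=.
apply: eq_bigr => j _.
rewrite big_ltn // addn0 -muln_gcdl divnMr //; congr (_ + _).
rewrite -sum_nat_const_nat.
apply: eq_big_nat => r /andP [r1 rp].
suff /eqnP -> : coprime (p ^ a * p) (j * p + r) by rewrite divn1.
rewrite -expnSr coprime_pexpl // prime_coprime // dvdn_addr ?dvdn_mull //.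
by rewrite gtnNdvd.
Qed.

Lemma T_pp p a : prime p -> (p + 1) * T (p ^ a) = p ^ (2 * a + 1) + 1.
Proof.
move=> pp; have p1 := prime_gt1 pp.
elim: a => [|a IH]; first by rewrite expn0 T1 muln1 expn1.
rewrite T_step // mulnDr IH.
have e1 : p ^ (2 * a + 1) = p ^ a * p ^ a * p.
  by rewrite -[p in RHS]expn1 -!expnD; congr (_ ^ _); lia.
have e2 : p ^ (2 * a.+1 + 1) = p ^ a * p ^ a * p * p * p.
  by rewrite -[p in RHS]expn1 -!expnD; congr (_ ^ _); lia.
rewrite e1 e2 expnS; set X := p ^ a.
have -> : p = (p - 1) + 1 by lia.
set u := p - 1; rewrite addnK.
ring.
Qed.

Lemma gcd_mul_dvd a b x : gcdn (a * b) x %| gcdn a x * gcdn b x.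
Proof.
set g := gcdn (a * b) x.
have gab : g %| a * b by exact: dvdn_gcdl.
have gx : g %| x by exact: dvdn_gcdr.
rewrite muln_gcdl dvdn_gcd; apply/andP; split.
  rewrite muln_gcdr dvdn_gcd gab /=; exact: dvdn_mull.
rewrite muln_gcdr dvdn_gcd; apply/andP; split; exact: dvdn_mulr.
Qed.

Lemma mod_inj a b i (x y : nat) : coprime a b -> x < b -> y < b ->
  (x * a + i) %% b = (y * a + i) %% b -> x = y.
Proof.
move=> co.
wlog le : x y / x <= y.
  move=> W xb yb E; have [h|h] := leqP x y; first exact: W.
  by symmetry; apply: (W y x) => //; exact: ltnW.
move=> xb yb /eqP; rewrite eqn_modDr eq_sym eqn_mod_dvd ?leq_mul2r ?le ?orbT //.
rewrite -mulnBl Gauss_dvdl; last by rewrite coprime_sym.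
move=> H; apply/eqP; rewrite eqn_leq le /= -subn_eq0.
apply/eqP; case: (ltnP 0 (y - x)) => [pos|]; [have := dvdn_leq pos H; lia | lia].
Qed.

Lemma T_shift a b i : coprime a b -> 0 < b ->
  \sum_(0 <= j < b) b %/ gcdn b (j * a + i) = T b.
Proof.
move=> co b0.
have E : forall y, b %/ gcdn b y = b %/ gcdn b (y %% b) by move=> y; rewrite gcdn_modr.
rewrite (eq_bigr (fun j => b %/ gcdn b ((j * a + i) %% b))); last by move=> j _; rewrite -E.
rewrite /T !big_mkord.
pose h (j : 'I_b) : 'I_b := Ordinal (ltn_pmod (j * a + i) b0).
have hinj : injective h.
  move=> x y /(congr1 val) /= E'; apply: val_inj => /=.
  exact: mod_inj co (ltn_ord x) (ltn_ord y) E'.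
by rewrite [RHS](reindex_inj hinj).
Qed.

Lemma T_mul a b : coprime a b -> T a * T b <= T (a * b).
Proof.
move=> co.
have [->|a0] := posnP a; first by rewrite T0.
have [->|b0] := posnP b; first by rewrite T0 muln0.
have -> : T (a * b) = \sum_(0 <= k < b * a) (a * b) %/ gcdn (a * b) k.
  by rewrite /T [b * a]mulnC.
rewrite sum_split.
apply: (@leq_trans (\sum_(0 <= j < b) \sum_(0 <= i < a)
           (a %/ gcdn a i) * (b %/ gcdn b (j * a + i)))); last first.
  apply: leq_sum => j _; apply: leq_sum => i _.
  set x := j * a + i.
  have -> : gcdn a i = gcdn a x by rewrite /x gcdnMDl.
  have ga : gcdn a x %| a by exact: dvdn_gcdl.
  have gb : gcdn b x %| b by exact: dvdn_gcdl.
  have gap : 0 < gcdn a x by rewrite gcdn_gt0 a0.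
  have gbp : 0 < gcdn b x by rewrite gcdn_gt0 b0.
  have -> : a %/ gcdn a x * (b %/ gcdn b x) = (a * b) %/ (gcdn a x * gcdn b x).
    have -> : a * b = (a %/ gcdn a x * (b %/ gcdn b x)) * (gcdn a x * gcdn b x).
      by rewrite -{1}(divnK ga) -{1}(divnK gb); ring.
    by rewrite mulnK // muln_gt0 gap gbp.
  apply: leq_div2l; first by rewrite gcdn_gt0 muln_gt0 a0 b0.
  by apply: dvdn_leq; [rewrite muln_gt0 gap gbp | exact: gcd_mul_dvd].
rewrite exchange_big_nat /= /T big_distrl /=.
apply: eq_leq; apply: eq_bigr => i _.
by rewrite -big_distrr /= T_shift.
Qed.

Lemma odd_prime_ge3 p : prime p -> odd p -> 3 <= p.
Proof.
move=> pp op; have := prime_gt1 pp; case: p pp op => [|[|[|p]]] //.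
Qed.

Lemma NT_main n : odd n -> 0 < n -> forall l, 2 <= l ->
  (forall r, prime r -> r %| n -> r <= l) -> 3 * n ^ 2 <= (l + 1) * T n.
Proof.
elim/ltn_ind: n => n IH on n0 l l2 Hl.
case: (ltnP 1 n) => [n1|n1]; last first.
  have -> : n = 1 by lia.
  by rewrite T1; lia.
set p := max_pdiv n.
have pp : prime p := max_pdiv_prime n1.
have pdn : p %| n := max_pdiv_dvd n.
have pl : p <= l := Hl p pp pdn.
have p3 : 3 <= p by apply: odd_prime_ge3 => //; exact: dvdn_odd pdn on.
set a := logn p n.
have a0 : 0 < a by rewrite /a logn_gt0 mem_primes pp n0 pdn.
have qE : n`_p = p ^ a by rewrite p_part.
have nqm : n`_p * n`_p^' = n := partnC p n0.
set m := n`_p^' in nqm *.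
have co : coprime (n`_p) m := coprime_partC _ _ _.
have m0 : 0 < m := part_gt0 _ _.
have pq : p %| n`_p by rewrite qE; apply: dvdn_exp.
have cpm : coprime p m := coprime_dvdl pq co.
have q1 : p <= n`_p := dvdn_leq (part_gt0 _ _) pq.
have mn : m < n by rewrite -nqm; nia.
have mdn : m %| n by rewrite -nqm dvdn_mull.
have om : odd m := dvdn_odd mdn on.
have IHm : 3 * m ^ 2 <= (p.-1 + 1) * T m.
  apply: IH => //; first lia.
  move=> r rp rm.
  have rn : r %| n := dvdn_trans rm mdn.
  have rle : r <= p by apply: max_pdiv_max; rewrite mem_primes rp n0 rn.
  suff : r != p by lia.
  apply/eqP => erp; move: cpm; rewrite -erp prime_coprime //.
  by rewrite rm.
have Tq : (p + 1) * T (n`_p) = n`_p * n`_p * p + 1.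
  rewrite qE T_pp //; congr (_ + _).
  by rewrite -[p in RHS]expn1 -!expnD; congr (_ ^ _); lia.
have Tn : T (n`_p) * T m <= T n by rewrite -{2}nqm; exact: T_mul.
have e : p.-1 + 1 = p by lia.
rewrite e in IHm.
rewrite -nqm.
set q := n`_p in Tq Tn q1 *.
apply: (@leq_trans (q * q * (p * T m))).
  have -> : 3 * (q * m) ^ 2 = q * q * (3 * m ^ 2) by ring.
  by rewrite leq_mul2l IHm orbT.
apply: (@leq_trans ((p + 1) * T q * T m)).
  rewrite mulnA leq_mul2r Tq leq_addr orbT //.
rewrite -mulnA; apply: leq_mul; first lia.
by rewrite -nqm in Tn.
Qed.

Lemma NT1 n : odd n -> 1 < n -> 2 * n * (n %/ max_pdiv n) <= T n.
Proof.
move=> on n1; set p := max_pdiv n.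
have pp : prime p := max_pdiv_prime n1.
have pdn : p %| n := max_pdiv_dvd n.
have p2 := prime_gt1 pp.
have H := @NT_main n on (ltnW n1) p (prime_gt1 pp).
have /(_ _) H' : forall r, prime r -> r %| n -> r <= p.
  by move=> r rp rn; apply: max_pdiv_max; rewrite mem_primes rp (ltnW n1) rn.
have {H H'} H := H H'.
set k := n %/ p.
have nk : n = k * p by rewrite divnK.
have : (3 * p) * (2 * n * k) <= (3 * p) * T n.
  have -> : 3 * p * (2 * n * k) = 2 * (3 * n ^ 2) by rewrite nk; ring.
  apply: (@leq_trans (2 * ((p + 1) * T n))); first by rewrite leq_mul2l H orbT.
  rewrite mulnA leq_mul2r; apply/orP; right; lia.
by rewrite leq_mul2l; case/orP => //; lia.
Qed.

Lemma psi_cycle (gT : finGroupType) (a : gT) : psi <[a]>%g = T #[a]%g.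
Proof.
pose h (i : 'I_#[a]%g) := (a ^+ i)%g.
have hinj : injective h.
  move=> i j /eqP; rewrite /h eq_expg_mod_order !modn_small // => /eqP E.
  exact: val_inj.
have E : <[a]>%g = [set h i | i : 'I_#[a]%g].
  apply/eqP; rewrite eq_sym eqEcard; apply/andP; split.
    by apply/subsetP => x /imsetP [i _ ->]; rewrite mem_cycle.
  by rewrite card_imset // card_ord.
rewrite /psi E big_imset /=; last by move=> i j _ _; exact: hinj.
rewrite /T big_mkord; apply: eq_bigr => i _.
by rewrite /h orderXgcd.
Qed.

Lemma psi_cyclic (gT : finGroupType) (G : {group gT}) : cyclic G -> psi G = T #|G|.
Proof. by case/cyclicP => x ->; rewrite psi_cycle. Qed.

Lemma psiC_T n : 0 < n -> psiC n = T n.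
Proof.
move=> n0; rewrite /psiC.
have cZ : cyclic (Zp n).
  rewrite /Zp; case: ifP => _; last exact: cyclic1.
  rewrite Zp_cycle; exact: cycle_cyclic.
by rewrite (psi_cyclic cZ) card_Zp.
Qed.


Section G.
Local Open Scope group_scope.
Variable gT : finGroupType.
Implicit Types (G H P : {group gT}) (x y z : gT).

Lemma order_coset_le (P : {group gT}) x : x \in 'N(P) ->
  (#[x] <= #[coset P x] * #[x ^+ #[coset P x]])%N.
Proof.
move=> xN; apply: dvdn_leq; first by rewrite muln_gt0 !order_gt0.
by rewrite order_dvdn expgM expg_order.
Qed.

Lemma exp_coset_in (P : {group gT}) x : x \in 'N(P) ->
  (x ^+ #[coset P x] \in P)%g.
Proof.
move=> xN; apply: coset_idr; first exact: groupX.
by rewrite morphX // expg_order.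
Qed.

Lemma z_exp p (P : {group gT}) z : p.-group P -> z \in 'N(P) -> p^'.-elt z ->
  (z ^+ #[coset P z] = 1)%g.
Proof.
move=> pP zN z'p; set w := (z ^+ _)%g.
have wP : w \in P by exact: exp_coset_in.
apply/eqP; rewrite -order_eq1; apply/eqP.
apply: (@pnat_1 p); [exact: mem_p_elt pP wP | exact: p_eltX].
Qed.

Lemma coset_p'part p (G P : {group gT}) y : p.-Sylow(G) P -> P <| G -> y \in G ->
  coset P (y.`_p^') = coset P y.
Proof.
move=> sP nP yG.
have yp : y.`_p \in P by rewrite (mem_normal_Hall sP nP) ?p_elt_constt ?groupX //.
by rewrite -{2}(consttC p y) coset_kerl.
Qed.

Lemma constt_in (H : {group gT}) y pi : y \in H -> y.`_pi \in H.
Proof. by move=> yH; apply: (subsetP _ _ (cycle_constt pi y)); rewrite cycle_subG. Qed.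

Lemma big_order_sylow p G x : prime p -> x \in G -> (#|G| %/ p < #[x])%N ->
  p.-Sylow(G) <[x.`_p]> /\ <[x.`_p]> <| G.
Proof.
move=> pp xG lt.
set n := #|G|; set o := #[x]; set P := <[x.`_p]>%G.
have p0 := prime_gt0 pp.
have od : (o %| n)%N := order_dvdG xG.
have n0 : (0 < n)%N := cardG_gt0 G.
set k := (n %/ o)%N.
have nk : n = (o * k)%N by rewrite /k mulnC divnK.
have k0 : (0 < k)%N by move: n0; rewrite nk muln_gt0 => /andP[].
have ltn : (n < o * p)%N by rewrite -ltn_divLR.
have kp : (k < p)%N by move: ltn; rewrite nk ltn_mul2l => /andP[].
have kpart : (k`_p)%N = 1%N.
  by apply: part_p'nat; rewrite p'natE // gtnNdvd.
have cP : #|P| = (n`_p)%N by rewrite /= -/(#[_]) order_constt nk partnM ?kpart ?muln1 // order_gt0.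
have PG : P \subset G by rewrite cycle_subG constt_in.
have sP : p.-Sylow(G) P by rewrite pHallE PG cP eqxx.
split => //.
have xN : <[x]> \subset 'N_G(P).
  rewrite subsetI cycle_subG xG /=.
  apply: sub_abelian_norm; first exact: cycle_abelian.
  by rewrite cycle_subG cycle_constt.
have NG : 'N_G(P) \subset G := subsetIl _ _.
have L : (#|'N_G(P)| * #|G : 'N_G(P)|)%N = n := Lagrange NG.
have oN : (o <= #|'N_G(P)|)%N := subset_leq_card xN.
have s1 := card_Syl_mod G pp.
rewrite (card_Syl sP) in s1.
set s := #|G : 'N_G(P)| in s1 L.
have s_1 : s = 1%N.
  have := divn_eq s p; rewrite s1 => sE.
  case: (posnP (s %/ p)) => [z|pos].
    by rewrite sE z.
  exfalso.
  have : ((p + 1) * #|'N_G(P)| <= n)%N.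
    rewrite -L mulnC leq_mul2l; apply/orP; right.
    by rewrite sE leq_add2r leq_pmull.
  nia.
have NGe : 'N_G(P) = G.
  apply/eqP; rewrite eqEcard NG /=; by rewrite -/n -L s_1 muln1.
by rewrite /normal PG -NGe subsetIr.
Qed.

Lemma fiber_set (P H : {group gT}) y : P \subset H -> H \subset 'N(P) -> y \in H ->
  [set x in H | coset P x == coset P y] = P :* y.
Proof.
move=> PH HN yH; apply/setP => x; rewrite !inE.
have yN := subsetP HN y yH.
apply/andP/idP => [[xH /eqP E] | xPy].
  by apply/rcoset_kercosetP => //; exact: subsetP HN x xH.
have xH : x \in H.
  by case/rcosetP: xPy => u uP ->; rewrite groupM // (subsetP PH).
split => //; apply/eqP; apply/rcoset_kercosetP => //; exact: subsetP HN x xH.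
Qed.

Lemma sum_fiber (P H : {group gT}) (f : coset_of P -> nat) :
  P \subset H -> H \subset 'N(P) ->
  (\sum_(x in H) f (coset P x) = #|P| * \sum_(c in H / P) f c)%N.
Proof.
move=> PH HN.
rewrite (partition_big_imset (coset P)) /= /quotient morphimEsub // big_distrr /=.
apply: eq_bigr => c /imsetP [y yH ->].
rewrite (eq_bigr (fun _ => f (coset P y))); last by move=> x /andP [_ /eqP ->].
rewrite sum_nat_const; congr (_ * _)%N.
by rewrite -(card_rcoset P y) -(fiber_set PH HN yH); apply: eq_card => x; rewrite !inE.
Qed.

Lemma bound1 p (G P : {group gT}) x : prime p -> p.-group P -> P <| G ->
  x \in G -> x \notin 'C(P) -> (#[x ^+ #[coset P x]] <= #|P| %/ p)%N.
Proof.
move=> pp pP nP xG xC.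
have xN : x \in 'N(P) := subsetP (normal_norm nP) x xG.
set w := x ^+ _.
have wP : w \in P by exact: exp_coset_in.
have wq : (#[w] %| #|P|)%N := order_dvdG wP.
have := wq; rewrite (card_pgroup pP); case/(dvdn_pfactor _ _ pp) => b ble wE.
set a := logn p #|P| in ble wE *.
have ba : b != a.
  apply/eqP => eba; move/negP: xC; apply; rewrite -sub_cent1.
  have wPe : <[w]> = P.
    apply/eqP; rewrite eqEcard cycle_subG wP /= -/(#[w]) wE eba.
    by rewrite -(card_pgroup pP).
  rewrite -wPe cycle_subG; apply/cent1P.
  exact/commute_sym/commuteX/commute_refl.
rewrite wE leq_divRL ?prime_gt0 // -expnSr leq_pexp2l ?prime_gt0 //.
by rewrite ltn_neqAle ba ble.
Qed.

Lemma cent_fiber p (G P : {group gT}) y : prime p -> p.-Sylow(G) P -> P <| G ->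
  abelian P -> y \in 'C_G(P) ->
  (\sum_(x in 'C_G(P) | coset P x == coset P y)
      #[coset P x] * #[x ^+ #[coset P x]] <= #[coset P y] * psi P)%N.
Proof.
move=> pp sP nP aP yC.
have pP := pHall_pgroup sP.
have PG := pHall_sub sP.
have PC : P \subset 'C_G(P) by rewrite subsetI PG.
have CN : 'C_G(P) \subset 'N(P) := subset_trans (subsetIl _ _) (normal_norm nP).
have yG : y \in G := subsetP (subsetIl _ _) y yC.
set z := y.`_p^'.
have zC : z \in 'C_G(P) := constt_in _ yC.
have ez : coset P z = coset P y := coset_p'part sP nP yG.
rewrite (eq_bigr (fun x => #[coset P y] * #[x ^+ #[coset P y]])%N); last first.
  by move=> x /andP [_ /eqP ->].
rewrite -big_distrr leq_mul2l; apply/orP; right.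
have -> : (\sum_(x in 'C_G(P) | coset P x == coset P y) #[x ^+ #[coset P y]] =
           \sum_(x in P :* z) #[x ^+ #[coset P y]])%N.
  rewrite -(fiber_set PC CN zC) ez; apply: eq_bigl => x; by rewrite !inE.
rewrite -rcosetE /rcoset big_imset /=; last by move=> u v _ _; exact: mulIg.
apply: leq_sum => u uP.
have zCP : z \in 'C(P) := subsetP (subsetIr _ _) z zC.
have cuz : commute u z by apply: commute_sym; exact: (centP zCP) u uP.
have zN : z \in 'N(P) := subsetP CN z zC.
rewrite expgMn // -ez (z_exp pP zN) ?p_elt_constt // mulg1.
by apply: dvdn_leq; [exact: order_gt0 | exact: orderXdvd].
Qed.

Lemma core p (G P : {group gT}) : prime p -> p.-Sylow(G) P -> P <| G -> abelian P ->
  (psi G + #|P| %/ p * #|P| * psi ('C_G(P) / P)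
    <= psi P * psi ('C_G(P) / P) + #|P| %/ p * #|P| * psi (G / P))%N.
Proof.
move=> pp sP nP aP.
have pP := pHall_pgroup sP.
have PG := pHall_sub sP.
have GN := normal_norm nP.
have PC : P \subset 'C_G(P) by rewrite subsetI PG.
have CN : 'C_G(P) \subset 'N(P) := subset_trans (subsetIl _ _) GN.
set F := fun x => (#[coset P x] * #[x ^+ #[coset P x]])%N.
have h1 : (psi G <= \sum_(x in G) F x)%N.
  by apply: leq_sum => x xG; apply: order_coset_le; exact: subsetP GN x xG.
rewrite (big_setID 'C(P)) /= in h1.
have h3 : (\sum_(x in 'C_G(P)) F x <= psi P * psi ('C_G(P) / P))%N.
  rewrite (partition_big_imset (coset P)) /= /psi /quotient morphimEsub //.
  rewrite mulnC big_distrl /=.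
  apply: leq_sum => c /imsetP [y yC ->].
  exact: (cent_fiber pp sP nP aP yC).
set S2 := (\sum_(x in G :\: 'C(P)) #[coset P x])%N.
have h4 : (\sum_(x in G :\: 'C(P)) F x <= #|P| %/ p * S2)%N.
  rewrite /S2 big_distrr /=; apply: leq_sum => x.
  rewrite inE => /andP [xC xG].
  rewrite /F mulnC leq_mul2r; apply/orP; right.
  exact: (bound1 pp pP nP xG xC).
have h5 := sum_fiber (fun c => #[c]) PG GN.
rewrite (big_setID 'C(P)) /= -/S2 in h5.
have h6 := sum_fiber (fun c => #[c]) PC CN.
rewrite h6 in h5.
rewrite /psi.
set q := #|P| in h4 h5 h6 *.
set t := (q %/ p)%N in h4 *.
set A := (\sum_(c in 'C_G(P) / P) #[c])%N in h5 h6 *.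
set B := (\sum_(c in G / P) #[c])%N in h5 *.
rewrite /psi -/A in h3.
have e : (t * S2 + t * (q * A) = t * (q * B))%N by rewrite -mulnDr addnC h5.
rewrite !mulnA in e.
set Y1 := (t * S2)%N in h4 e.
set Y2 := (t * q * A)%N in e *.
set Y3 := (t * q * B)%N in e *.
rewrite /psi in h1.
set Z := ((\sum_(x in P) #[x]) * A)%N in h3 *.
apply: (leq_trans (leq_add h1 (leqnn Y2))).
apply: (@leq_trans (Z + Y1 + Y2)); first by rewrite leq_add2r leq_add.
lia.
Qed.

Lemma caseB (G : {group gT}) k : (forall x, x \in G -> #[x] <= k)%N ->
  (psi G <= 1 + (#|G| - 1) * k)%N.
Proof.
move=> Hk; rewrite /psi (bigD1 1) //= order1 leq_add2l.
apply: (@leq_trans (\sum_(x in G | x != 1%g) k)%N).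
  by apply: leq_sum => x /andP [xG _]; exact: Hk.
rewrite -[k in X in (X <= _)%N]mul1n -big_distrl /= sum1_card leq_mul2r; apply/orP; right.
rewrite (cardD1 1 G) group1 add1n subn1 /=.
by apply: eq_leq; apply: eq_card => x; rewrite !inE andbC.
Qed.

Lemma quo_noncyclic p (G P : {group gT}) : prime p -> p.-Sylow(G) P -> P <| G ->
  cyclic P -> G \subset 'C(P) -> ~~ cyclic G -> ~~ cyclic (G / P).
Proof.
move=> pp sP nP cP GC ncG; apply/negP => /cyclicP [c Ec].
have cG : c \in G / P by rewrite Ec cycle_id.
case/morphimP: cG => y yN yG ->{c} in Ec.
have pP := pHall_pgroup sP.
have PG := pHall_sub sP.
set z := y.`_p^'.
have zG : z \in G := constt_in _ yG.
have zN : z \in 'N(P) := subsetP (normal_norm nP) z zG.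
have ez : coset P z = coset P y := coset_p'part sP nP yG.
have oz : #[z] = #[coset P y].
  apply/eqP; rewrite eqn_dvd; apply/andP; split.
    by rewrite order_dvdn -ez (z_exp pP zN) ?p_elt_constt.
  by rewrite -ez; exact: morph_order.
have n0 := cardG_gt0 G.
have cq : #|G / P| = (#|G|`_p^')%N.
  rewrite card_quotient ?normal_norm // -divgS // (card_Hall sP).
  by rewrite -{1}(partnC p n0) mulKn // part_gt0.
have zm : #[z] = #|G / P| by rewrite oz Ec.
have co : coprime #|P| #|<[z]>|.
  by rewrite -/(#[z]) zm cq (card_Hall sP) coprime_partC.
have czP : <[z]> \subset 'C(P) by rewrite cycle_subG (subsetP GC).
have cM := cyclicM cP (cycle_cyclic z) czP co.
have E : (P * <[z]>) = G :> {set gT}.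
  apply/eqP; rewrite eqEcard /= mulG_subG PG cycle_subG zG /=.
  rewrite coprime_cardMg // -/(#[z]) zm cq (card_Hall sP) partnC //.
by move/negP: ncG; apply; rewrite -E.
Qed.

End G.



Lemma A1 psiG A B U V W Tn : psiG + V * A <= U * A + V * B -> 3 * A <= W -> B <= W ->
  4 * V < U -> 0 < W -> U * W <= Tn -> 2 * psiG < Tn.
Proof.
move=> Hc a3 hB h4 W0 hT.
have hb : V * B <= V * W by rewrite leq_mul2l hB orbT.
have h3 : (U - V) * (3 * A) <= (U - V) * W by rewrite leq_mul2l a3 orbT.
have h5 : 4 * V * W < U * W by rewrite ltn_mul2r h4 W0.
apply: leq_trans hT.
have e1 : (U - V) * (3 * A) = 3 * (U * A) - 3 * (V * A).
  by rewrite mulnBl !(mulnCA _ 3).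
have e2 : (U - V) * W = U * W - V * W by rewrite mulnBl.
have VU : V <= U by lia.
have e3 : V * A <= U * A by rewrite leq_mul2r VU orbT.
have e4 : V * W <= U * W by rewrite leq_mul2r VU orbT.
rewrite e1 e2 in h3.
have e5 : 4 * V * W = 4 * (V * W) by rewrite mulnA.
rewrite e5 in h5.
move: Hc hb h3 h5 e3 e4.
set UA := U * A; set VA := V * A; set VB := V * B; set VW := V * W; set UW := U * W.
lia.
Qed.

Lemma A2 p q t T : 5 <= p -> t * p = q -> (p + 1) * T = q * q * p + 1 -> 4 * (t * q) < T.
Proof.
move=> p5 tq Tq.
have : (p * (p + 1)) * (4 * (t * q)) < (p * (p + 1)) * T.
  rewrite -[p * (p + 1) * T]mulnA Tq.
  have -> : p * (p + 1) * (4 * (t * q)) = (4 * (p + 1)) * (q * q).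
    by rewrite -tq; ring.
  apply: (@leq_ltn_trans (p * p * (q * q))).
    by rewrite leq_mul2r; apply/orP; right; nia.
  have -> : p * (q * q * p + 1) = p * p * (q * q) + p by ring.
  lia.
by rewrite ltn_mul2l muln_gt0; case/andP.
Qed.

Lemma A3 a b : 3 <= a -> odd a -> odd b -> a < b -> 5 <= b.
Proof.
move=> a3 oa ob ab.
case: b ob ab => [|[|[|[|[|b]]]]] //=; case: a a3 oa => [|[|[|[|a]]]] //.
Qed.

Lemma A5 psiG n k T : psiG <= 1 + (n - 1) * k -> 2 * n * k <= T -> 2 <= k -> 0 < n ->
  2 * psiG < T.
Proof.
move=> hB hN k2 n0.
have e : (n - 1) * k + k = n * k by rewrite mulnBl mul1n subnK // leq_pmull.
move: hB hN e; set NK := n * k; set N1K := (n - 1) * k.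
have -> : 2 * n * k = 2 * NK by rewrite -mulnA.
lia.
Qed.

Lemma A7 q m n p : q * m = n -> p <= q -> 1 < p -> 0 < m -> m < n.
Proof.
move=> <- pq p1 m0; rewrite -[m in m < _]mul1n ltn_mul2r m0 /=; lia.
Qed.

Lemma main n : forall (gT : finGroupType) (G : {group gT}), #|G| = n -> odd n ->
  psi G <= T n /\ (~~ cyclic G -> 2 * psi G < T n).
Proof.
elim/ltn_ind: n => n IH gT G cG on.
have n0 : 0 < n by rewrite -cG cardG_gt0.
case cycG: (cyclic G).
  by split => //; rewrite psi_cyclic // cG.
suff H : 2 * psi G < T n by split => //; apply: ltnW (leq_ltn_trans (leq_pmull _ _) H).
have n3 : 3 < n.
  by rewrite ltnNge; apply/negP => le; move: cycG; rewrite cyclic_small // cG.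
have n1 : 1 < n := leq_trans (isT : 1 < 3) (ltnW n3).
set p := max_pdiv n.
have pp : prime p := max_pdiv_prime n1.
have pdn : p %| n := max_pdiv_dvd n.
have p3 : 3 <= p by apply: odd_prime_ge3 => //; exact: dvdn_odd pdn on.
case: (boolP [exists x in G, n %/ p < #[x]%g]) => [/exists_inP [x xG lt] | nox].
  have lt' : #|G| %/ p < #[x]%g by rewrite cG.
  have [sP nP] := big_order_sylow pp xG lt'.
  set P := <[x.`_p]>%G in sP nP.
  have cP : cyclic P := cycle_cyclic _.
  have aP : abelian P := cyclic_abelian cP.
  have PG := pHall_sub sP.
  have GN := normal_norm nP.
  have qE : #|P| = n`_p by rewrite (card_Hall sP) cG.
  have nqm : n`_p * n`_p^' = n := partnC p n0.
  have mE : #|(G / P)%g| = n`_p^'.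
    rewrite card_quotient // -divgS // cG qE.
    by rewrite -{1}nqm mulKn // part_gt0.
  set q := n`_p in qE nqm.
  set m := n`_p^' in mE nqm.
  have co : coprime q m := coprime_partC _ _ _.
  have m0 : 0 < m := part_gt0 _ _.
  have a0 : 0 < logn p n by rewrite logn_gt0 mem_primes pp n0 pdn.
  have pq : p %| q by rewrite /q p_part; apply: dvdn_exp.
  have q1 : p <= q := dvdn_leq (part_gt0 _ _) pq.
  have mn : m < n := A7 nqm q1 (prime_gt1 pp) m0.
  have mdn : m %| n by rewrite -nqm dvdn_mull.
  have om : odd m := dvdn_odd mdn on.
  have psiP : psi P = T q by rewrite psi_cyclic // qE.
  have Tq : (p + 1) * T q = q * q * p + 1.
    rewrite /q p_part T_pp //; congr (_ + _).
    by rewrite expnD expn1 mul2n -addnn expnD.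
  have Tq0 : 0 < T q by rewrite lt0n; apply/eqP => e; move: Tq; rewrite e muln0 addn1.
  have Tn : T q * T m <= T n by rewrite -[in X in _ <= X]nqm; exact: T_mul.
  have [IHB _] := IH m mn _ (G / P)%G mE om.
  have Hc := core pp sP nP aP.
  rewrite psiP qE in Hc.
  set t := q %/ p in Hc.
  have tq : t * p = q by rewrite /t divnK.
  case: (boolP (G \subset 'C(P)%g)) => GC.
    have CG : 'C_G(P)%g = G by apply/setIidPl.
    rewrite CG in Hc.
    have ncQ := quo_noncyclic pp sP nP cP GC (negbT cycG).
    have [_ IHB2] := IH m mn _ (G / P)%G mE om.
    have {IHB2} IHB2 := IHB2 ncQ.
    have h1 : psi G <= T q * psi (G / P)%g by move: Hc; rewrite leq_add2r.
    apply: (@leq_trans (T q * T m)) => //.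
    apply: (@leq_ltn_trans (T q * (2 * psi (G / P)%g))).
      by rewrite mulnCA leq_mul2l h1 orbT.
    by rewrite ltn_mul2l Tq0.
  set C := 'C_G(P)%g in Hc.
  have CG : C \subset G := subsetIl _ _.
  have CN : C \subset 'N(P)%g := subset_trans CG GN.
  have PC : P \subset C by rewrite subsetI PG.
  set k := #|(C / P)%g|.
  have kdm : k %| m by rewrite -mE cardSg // quotientS.
  have kE : k * q = #|C| by rewrite /k card_quotient // -qE mulnC Lagrange.
  have km : k != m.
    apply/eqP => ekm; move/negP: GC; apply.
    have eC : C = G.
      apply/eqP; rewrite eqEcard CG /= -kE ekm -(Lagrange PG) qE mulnC.
      by rewrite -card_quotient // mE.
    by rewrite -eC subsetIr.
  set r := m %/ k.
  have mrk : m = r * k by rewrite /r divnK.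
  have r3 : 3 <= r.
    have : odd r by move: om; rewrite mrk oddM => /andP[].
    have : r != 1 by apply/eqP => r1; move: km; rewrite mrk r1 mul1n eqxx.
    have : 0 < r by move: m0; rewrite mrk muln_gt0 => /andP[].
    case: (r) => [|[|[|]]] //.
  have kn : k < n by apply: leq_ltn_trans mn; apply: dvdn_leq.
  have ok : odd k := dvdn_odd kdm om.
  have [IHA _] := IH k kn _ (C / P)%G erefl ok.
  have Tk : r * T k <= T m by rewrite mrk T_mulr.
  have k0 : 0 < k by rewrite /k cardG_gt0.
  have m1 : 1 < m by rewrite mrk; exact: leq_trans (leq_trans (isT : 1 < 3) r3) (leq_pmulr r k0).
  have p5 : 5 <= p.
    set r' := pdiv m.
    have rp : prime r' := pdiv_prime m1.
    have rdm : r' %| m := pdiv_dvd m.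
    have r3' : 3 <= r' by apply: odd_prime_ge3 => //; exact: dvdn_odd rdm om.
    have rle : r' <= p.
      apply: max_pdiv_max; rewrite mem_primes rp n0; exact: dvdn_trans rdm mdn.
    have rne : r' != p.
      apply/eqP => erp; have cpm : coprime p m := coprime_dvdl pq co.
      by move: cpm; rewrite -erp prime_coprime // rdm.
    have op : odd p := dvdn_odd pdn on.
    have or : odd r' := dvdn_odd rdm om.
    by apply: (A3 r3' or op); rewrite ltn_neqAle rne rle.
  have h4 : 4 * (t * q) < T q := A2 p5 tq Tq.
  set A := psi (C / P)%g in Hc IHA.
  set B := psi (G / P)%g in Hc IHB.
  have a3 : 3 * A <= T m.
    apply: leq_trans Tk; apply: leq_mul => //; exact: leq_trans IHA.
  have W0 : 0 < T m.
    by apply: leq_trans m0 _; have := T_mulr m 1; rewrite T1 !muln1.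
  exact: A1 Hc a3 IHB h4 W0 Tn.
have Hk : forall y, y \in G -> #[y]%g <= n %/ p.
  move=> y yG; move: nox; rewrite negb_exists_in => /forall_inP /(_ y yG).
  by rewrite -leqNgt.
have hB := caseB Hk; rewrite cG in hB.
have hN := NT1 on n1; rewrite -/p in hN.
set k := n %/ p in Hk hB hN.
have nk : n = k * p by rewrite /k divnK.
have k2 : 2 <= k.
  have : n != p.
    apply/eqP => np; move: cycG; rewrite prime_cyclic // cG np //.
  move: n0; rewrite nk; case: (k) => [|[|]] //; rewrite ?mul1n ?eqxx //.
exact: A5 hB hN k2 n0.
Qed.

Theorem corollary4 (gT : finGroupType) (G : {group gT}) :
  odd #|G| -> ~~ cyclic G -> (2 * psi G < psiC #|G|)%N.
Proof.
move=> oG ncG.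
rewrite psiC_T ?cardG_gt0 //.
by have [_ H] := main erefl oG; apply: H.
Qed.
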